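(* Let $\{\Pi_i\}_{i=1}^n$ be a qubit POVM written as $\Pi_i=\alpha_i(\mathbb{I}+\eta_i\hat n_i\cdot\vec\sigma)$ with $\alpha_i\ge0$, $\eta_i\in[0,1]$, $\hat n_i$ unit vectors, $\sum_i\alpha_i=1$, $\sum_i\alpha_i\eta_i\hat n_i=\vec0$. Then $$R(\{\Pi_i\})=\inf_{\substack{\vec c\in\mathbb{R}^3,\ |\vec c|=1\\ c_0\in[-1,1]}}\ \sum_{i=1}^n\bigl|\alpha_i(c_0+\eta_i\,\vec c\cdot\hat n_i)\bigr|.$$
   Context: A POVM $\{\Pi_i\}$ simulates a family $\{M_{a|x}\}$ if $M_{a|x}=\sum_i p(a|x,i)\Pi_i$ with $p(a|x,i)\ge0$, $\sum_a p(a|x,i)=1$. $\mathcal{P}_r$ is the family of two-outcome POVMs $\{\tfrac12(\mathbb{I}\pm r\hat n\cdot\vec\sigma)\}$ over all unit $\hat n\in\mathbb{R}^3$. $R(\{\Pi_i\})$ is the largest $r$ such that $\{\Pi_i\}$ simulates $\mathcal{P}_r$. *)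

(* Defs.v *)
From HB Require Import structures.
From mathcomp Require Import all_boot all_order all_algebra.
From mathcomp Require Import complex.
From mathcomp Require Import all_classical all_reals.
Set Implicit Arguments. Unset Strict Implicit. Unset Printing Implicit Defensive.
Import Order.TTheory GRing.Theory Num.Theory.
Local Open Scope ring_scope.
Local Open Scope complex_scope.

Section Qubit.
Variable R : realType.
Local Notation C := R[i].

Definition sigmaX : 'M[C]_2 :=
  \matrix_(a < 2, b < 2) (if a != b then 1 else 0).
Definition sigmaY : 'M[C]_2 :=
  \matrix_(a < 2, b < 2)
    (if (val a == 0%N) && (val b == 1%N) then - 'i
     else if (val a == 1%N) && (val b == 0%N) then 'i else 0).
Definition sigmaZ : 'M[C]_2 :=
  \matrix_(a < 2, b < 2)
    (if a == b then (if val a == 0%N then 1 else -1) else 0).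

Definition sigma (k : 'I_3) : 'M[C]_2 :=
  if val k == 0%N then sigmaX else if val k == 1%N then sigmaY else sigmaZ.

Definition dot3 (u v : 'rV[R]_3) : R := \sum_(k < 3) u 0 k * v 0 k.
Definition unit3 (v : 'rV[R]_3) : Prop := dot3 v v = 1.

Definition ndotsigma (v : 'rV[R]_3) : 'M[C]_2 :=
  \sum_(k < 3) (v 0 k)%:C *: sigma k.

Definition simulates (n : nat) (X : Type) (A : finType)
    (Pi : 'I_n -> 'M[C]_2) (M : X -> A -> 'M[C]_2) : Prop :=
  exists p : A -> X -> 'I_n -> R,
    (forall a x i, 0 <= p a x i) /\
    (forall x i, \sum_(a : A) p a x i = 1) /\
    (forall a x, M x a = \sum_(i < n) (p a x i)%:C *: Pi i).

Definition unit_vec := {v : 'rV[R]_3 | unit3 v}.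

Definition Pfam (r : R) : unit_vec -> bool -> 'M[C]_2 :=
  fun x a => (2^-1)%:C *: (1%:M + ((if a then 1 else -1) * r)%:C *: ndotsigma (sval x)).

Definition is_Rval (n : nat) (Pi : 'I_n -> 'M[C]_2) (r : R) : Prop :=
  simulates Pi (Pfam r) /\ (forall r', simulates Pi (Pfam r') -> r' <= r).

Definition povm_of (n : nat) (alpha eta : 'I_n -> R) (nv : 'I_n -> 'rV[R]_3)
  : 'I_n -> 'M[C]_2 :=
  fun i => (alpha i)%:C *: (1%:M + (eta i)%:C *: ndotsigma (nv i)).

End Qubit.

(* Main.v *)
Require Import Defs.
From HB Require Import structures.
From mathcomp Require Import all_boot all_order all_algebra.
From mathcomp Require Import complex.
From mathcomp Require Import all_classical all_reals.
From mathcomp Require Import ring lra.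
Import Order.TTheory GRing.Theory Num.Theory.
Local Open Scope ring_scope.
Local Open Scope classical_set_scope.
Set Implicit Arguments. Unset Strict Implicit.

Section Basic.
Variable R : realType.
Local Notation C := R[i].

Lemma sum3 (V : zmodType) (F : 'I_3 -> V) : \sum_(k < 3) F k = F 0 + F 1 + F 2%:R.
Proof. rewrite !big_ord_recl big_ord0 addr0 addrA; by congr (F _ + F _ + F _); apply/val_inj. Qed.

Lemma dot3E (u w : 'rV[R]_3) : dot3 u w = u 0 0 * w 0 0 + u 0 1 * w 0 1 + u 0 2%:R * w 0 2%:R.
Proof. by rewrite /dot3 sum3. Qed.

Lemma dot3_linl (s : R) (u u' w : 'rV[R]_3) : dot3 (s *: u + u') w = s * dot3 u w + dot3 u' w.
Proof. rewrite !dot3E !mxE; ring. Qed.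

Lemma dot3_scale (s : R) (u w : 'rV[R]_3) : dot3 u (s *: w) = s * dot3 u w.
Proof. rewrite !dot3E !mxE; ring. Qed.

Lemma dot3_scalel (s : R) (u w : 'rV[R]_3) : dot3 (s *: u) w = s * dot3 u w.
Proof. rewrite !dot3E !mxE; ring. Qed.

Lemma dot3_0 (u : 'rV[R]_3) : dot3 u 0 = 0.
Proof. rewrite !dot3E !mxE; ring. Qed.

Lemma dot3N (u w : 'rV[R]_3) : dot3 (- u) w = - dot3 u w.
Proof. rewrite !dot3E !mxE; ring. Qed.

Lemma dot3_sum m (u : 'rV[R]_3) (F : 'I_m -> 'rV[R]_3) : dot3 u (\sum_(i < m) F i) = \sum_(i < m) dot3 u (F i).
Proof.
rewrite /dot3; under eq_bigr do rewrite summxE mulr_sumr.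
exact: exchange_big.
Qed.

Lemma dot3_delta (k : 'I_3) (w : 'rV[R]_3) : dot3 (\row_(m < 3) ((m == k)%:R : R)) w = w 0 k.
Proof.
rewrite /dot3 (bigD1 k) //= !mxE eqxx mul1r big1 ?addr0 // => m /negbTE.
by rewrite mxE => ->; rewrite mul0r.
Qed.

Lemma CS (u w : 'rV[R]_3) : unit3 u -> unit3 w -> -1 <= dot3 u w <= 1.
Proof.
rewrite /unit3 !dot3E => hu hw.
have h1 := sqr_ge0 (u 0 0 - w 0 0); have h2 := sqr_ge0 (u 0 1 - w 0 1);
have h3 := sqr_ge0 (u 0 2%:R - w 0 2%:R).
have h4 := sqr_ge0 (u 0 0 + w 0 0); have h5 := sqr_ge0 (u 0 1 + w 0 1);
have h6 := sqr_ge0 (u 0 2%:R + w 0 2%:R).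
apply/andP; split; nra.
Qed.

Lemma CS2 (u w : 'rV[R]_3) : dot3 u w ^+ 2 <= dot3 u u * dot3 w w.
Proof.
rewrite !dot3E.
have h1 := sqr_ge0 (u 0 0 * w 0 1 - u 0 1 * w 0 0).
have h2 := sqr_ge0 (u 0 0 * w 0 2%:R - u 0 2%:R * w 0 0).
have h3 := sqr_ge0 (u 0 1 * w 0 2%:R - u 0 2%:R * w 0 1).
nra.
Qed.

Lemma dot3_ge0 (u : 'rV[R]_3) : 0 <= dot3 u u.
Proof.
rewrite dot3E; have := sqr_ge0 (u 0 0); have := sqr_ge0 (u 0 1); have := sqr_ge0 (u 0 2%:R); nra.
Qed.

Definition pm (a0 : R) (a : 'rV[R]_3) : 'M[C]_2 :=
  ((a0%:C)%C *: 1%:M) + ndotsigma a.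

Lemma nds_lin (s : R) u w : ndotsigma (s *: u + w) = (s%:C)%C *: ndotsigma u + ndotsigma w.
Proof.
rewrite /ndotsigma scaler_sumr -big_split /=; apply: eq_bigr => k _.
by rewrite !mxE rmorphD rmorphM /= scalerDl scalerA.
Qed.

Lemma nds0 : ndotsigma (0 : 'rV[R]_3) = 0.
Proof. by rewrite /ndotsigma big1 // => k _; rewrite mxE rmorph0 scale0r. Qed.

Lemma nds_scale (s : R) u : ndotsigma (s *: u) = (s%:C)%C *: ndotsigma u.
Proof. by rewrite -[s *: u]addr0 nds_lin nds0 addr0. Qed.

Lemma pmE a0 a : pm a0 a = \matrix_(j < 2, k < 2)
  (if (val j == 0%N) then (if val k == 0%N then ((a0 + a 0 2%:R) +i* 0)%C else (a 0 0 +i* (- a 0 1))%C)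
  else (if val k == 0%N then (a 0 0 +i* a 0 1)%C else ((a0 - a 0 2%:R) +i* 0)%C)).
Proof.
apply/matrixP => j k; rewrite /pm /ndotsigma !mxE summxE sum3 /sigma /= !mxE.
case: j k => [[|[|j]] Hj] [[|[|k]] Hk] //=.
all: by apply/eqP; rewrite eq_complex /=; apply/andP; split; apply/eqP; ring.
Qed.

Lemma pm_inj a0 a b0 b : pm a0 a = pm b0 b -> a0 = b0 /\ a = b.
Proof.
rewrite !pmE => /matrixP H.
have := H 0 0; have := H 1 1; have := H 1 0; rewrite !mxE /=.
case=> e0 e1 [e2] [e3].
split; first by lra.
apply/matrixP => i k; rewrite (ord1 i).
case: k => [[|[|[|k]]] Hk] //.
- by have -> : Ordinal Hk = 0 by apply/val_inj.
- by have -> : Ordinal Hk = 1 by apply/val_inj.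
- have -> : Ordinal Hk = 2%:R by apply/val_inj.
  lra.
Qed.

Lemma pm_lin (s : R) a0 a b0 b :
  (s%:C)%C *: pm a0 a + pm b0 b = pm (s * a0 + b0) (s *: a + b).
Proof.
rewrite /pm nds_lin rmorphD rmorphM scalerDl -scalerA scalerDr.
by rewrite addrACA.
Qed.

Lemma pm00 : pm 0 0 = 0.
Proof. by rewrite /pm nds0 rmorph0 scale0r addr0. Qed.

Lemma pm_sum m (q a : 'I_m -> R) (w : 'I_m -> 'rV[R]_3) :
  \sum_(i < m) ((q i)%:C)%C *: pm (a i) (w i) =
  pm (\sum_(i < m) q i * a i) (\sum_(i < m) q i *: w i).
Proof.
elim: m q a w => [|m IH] q a w; first by rewrite !big_ord0 pm00.
rewrite !big_ord_recr /= IH addrC pm_lin; congr pm; by rewrite addrC.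
Qed.

End Basic.
Section Z.
Variable R : realType.

Lemma divle (a b l m : R) : 0 < l -> 0 < m -> m * a <= l * b -> a / l <= b / m.
Proof.
move=> hl hm H; rewrite ler_pdivrMr // mulrAC ler_pdivlMr //.
by rewrite mulrC [_ * l]mulrC.
Qed.

Lemma zono (T : Type) (n : nat) : forall (X : T -> R) (v : nat -> T -> R),
  (forall c1 c2 (mu la : R), 0 <= mu -> 0 <= la -> exists c,
     X c = mu * X c1 + la * X c2 /\ forall i, v i c = mu * v i c1 + la * v i c2) ->
  (forall c, X c <= \sum_(i < n) `|v i c|) ->
  exists t : nat -> R, (forall i, -1 <= t i <= 1) /\
    forall c, X c <= \sum_(i < n) t i * v i c.
Proof.
elim: n => [|n IH] X v comb H.
  exists (fun _ => 0); split => [i|c]; first by lra.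
  by have := H c; rewrite !big_ord0.
pose w := v n; pose h c := \sum_(i < n) `|v i c|.
have Hh c : X c <= h c + `|w c| by have := H c; rewrite big_ord_recr.
have hsub c c1 c2 mu la : 0 <= mu -> 0 <= la ->
    (forall i, v i c = mu * v i c1 + la * v i c2) -> h c <= mu * h c1 + la * h c2.
  move=> hmu hla hv; rewrite /h !mulr_sumr -big_split /=; apply: ler_sum => i _.
  rewrite hv; apply: (le_trans (ler_normD _ _)).
  by rewrite !normrM (ger0_norm hmu) (ger0_norm hla).
pose L := [set y : R | y = -1 \/ exists c, 0 < w c /\ y = (X c - h c) / w c].
have Lub y : L y -> y <= 1 /\ forall d, w d < 0 -> y <= (h d - X d) / (- w d).
  case=> [->|[c [wc ->]]].
    split; first by lra.
    move=> d wd; rewrite ler_pdivlMr ?oppr_gt0 //.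
    have := Hh d; rewrite ltr0_norm //; lra.
  split.
    rewrite ler_pdivrMr // mul1r; have := Hh c; rewrite gtr0_norm //; lra.
  move=> d wd.
  have hmu : 0 < - w d by rewrite oppr_gt0.
  have [e [Xe ve]] := comb c d (- w d) (w c) (ltW hmu) (ltW wc).
  have we : w e = 0 by rewrite /w ve /w; ring.
  have := Hh e; rewrite we normr0 addr0 Xe => H1.
  have H2 := hsub e c d (- w d) (w c) (ltW hmu) (ltW wc) ve.
  apply: divle => //; nra.
have supL : has_sup L by split; [exists (-1); left | exists 1 => y /Lub []].
pose ts := sup L.
have ts1 : -1 <= ts by apply: sup_upper_bound => //; left.
have ts2 c : 0 < w c -> (X c - h c) / w c <= ts.
  by move=> wc; apply: sup_upper_bound => //; right; exists c.
have ts3 : ts <= 1 by apply: ge_sup; [exists (-1); left | move=> y /Lub []].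
have ts4 d : w d < 0 -> ts <= (h d - X d) / (- w d).
  by move=> wd; apply: ge_sup; [exists (-1); left | move=> y /Lub [] _ /(_ d wd)].
pose X' c := X c - ts * w c.
have comb' : forall c1 c2 (mu la : R), 0 <= mu -> 0 <= la -> exists c,
     X' c = mu * X' c1 + la * X' c2 /\ forall i, v i c = mu * v i c1 + la * v i c2.
  move=> c1 c2 mu la hmu hla; have [c [Xc vc]] := comb c1 c2 mu la hmu hla.
  by exists c; split => //; rewrite /X' Xc /w vc; ring.
have H' c : X' c <= \sum_(i < n) `|v i c|.
  rewrite /X' -/(h c); have := Hh c.
  case: (ltgtP (w c) 0) => wc.
  - have := ts4 c wc; rewrite ler_pdivlMr ?oppr_gt0 //; rewrite ltr0_norm //; nra.
  - have := ts2 c wc; rewrite ler_pdivrMr //; rewrite gtr0_norm //; nra.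
  - rewrite wc normr0; lra.
have [t [tb tH]] := IH X' v comb' H'.
exists (fun i => if i == n then ts else t i); split.
  by move=> i; case: (i == n) => //; lra.
move=> c; rewrite big_ord_recr /= eqxx.
rewrite (eq_bigr (fun i : 'I_n => t i * v i c)); last first.
  by move=> i _; rewrite ltn_eqF.
have := tH c; rewrite /X' /w; lra.
Qed.
End Z.

Section Main.
Variable R : realType.
Variable n : nat.
Variables alpha eta : 'I_n -> R.
Variable nv : 'I_n -> 'rV[R]_3.
Hypothesis ha : forall i, 0 <= alpha i.
Hypothesis he : forall i, 0 <= eta i <= 1.
Hypothesis hn : forall i, unit3 (nv i).
Hypothesis hsum : \sum_(i < n) alpha i = 1.
Hypothesis hzero : \sum_(i < n) (alpha i * eta i) *: nv i = 0.

Definition hfun (c0 : R) (c : 'rV[R]_3) :=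
  \sum_(i < n) `|alpha i * (c0 + eta i * dot3 c (nv i))|.

Lemma sumlin c0 c : \sum_(i < n) alpha i * (c0 + eta i * dot3 c (nv i)) = c0.
Proof.
have := congr1 (dot3 c) hzero; rewrite dot3_0 dot3_sum => H.
under eq_bigr do rewrite mulrDr.
rewrite big_split /= -mulr_suml hsum mul1r.
rewrite [X in _ + X](_ : _ = 0) ?addr0 // -[RHS]H; apply: eq_bigr => i _.
by rewrite dot3_scale mulrA.
Qed.

Lemma hge c0 c : `|c0| <= hfun c0 c.
Proof. by rewrite -{1}(sumlin c0 c); apply: ler_norm_sum. Qed.

Lemma hfun_ge0 c0 c : 0 <= hfun c0 c.
Proof. by apply: sumr_ge0 => i _. Qed.

Definition e0 : 'rV[R]_3 := \row_(k < 3) ((k == 0)%:R : R).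

Lemma unit_e0 : unit3 e0.
Proof. by rewrite /unit3 dot3E !mxE /= mulr1 !mulr0 !addr0. Qed.

Lemma hfun1 c : unit3 c -> hfun 1 c = 1.
Proof.
move=> hc; rewrite /hfun -[RHS](sumlin 1 c); apply: eq_bigr => i _.
apply: ger0_norm; have := CS hc (hn i); have := he i; have := ha i.
move=> h1 /andP [h2 h3] /andP [h4 h5]; apply: mulr_ge0 => //; nra.
Qed.

Lemma sign_le (s y : R) : -1 <= s <= 1 -> s * y <= `|y|.
Proof.
move=> /andP [h1 h2]; case: (lerP 0 y) => hy.
  rewrite ger0_norm //; nra.
rewrite ltr0_norm //; nra.
Qed.

Definition Sset := [set x : R | exists (c : 'rV[R]_3) (c0 : R),
            unit3 c /\ -1 <= c0 <= 1 /\
            x = \sum_(i < n) `|alpha i * (c0 + eta i * dot3 c (nv i))|].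

Lemma S_ne : Sset !=set0.
Proof. by exists (hfun 0 e0); exists e0, 0; split; [exact: unit_e0 | split; [lra|]]. Qed.

Lemma S_lb : lbound Sset 0.
Proof. by move=> y [c [c0 [_ [_ ->]]]]; exact: hfun_ge0. Qed.

Lemma r0_ge0 : 0 <= inf Sset.
Proof. exact: lb_le_inf S_ne S_lb. Qed.

Lemma r0_le c c0 : unit3 c -> -1 <= c0 <= 1 -> inf Sset <= hfun c0 c.
Proof.
move=> hc hc0; apply: (ge_inf (E := Sset)); first by exists 0; exact: S_lb.
by exists c, c0.
Qed.

Lemma r0_le1 : inf Sset <= 1.
Proof. by rewrite -(hfun1 unit_e0); apply: r0_le; [exact: unit_e0| lra]. Qed.

Lemma key c0 c x : unit3 x -> inf Sset * dot3 c x <= hfun c0 c.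
Proof.
move=> hx; set r0 := inf Sset.
have r0p : 0 <= r0 by exact: r0_ge0.
case: (lerP (dot3 c x) 0) => hcx.
  apply: (le_trans _ (hfun_ge0 c0 c)); nra.
have cs := CS2 c x; have hxx : dot3 x x = 1 by [].
have ccp : 0 < dot3 c c.
  have := dot3_ge0 c; rewrite hxx mulr1 in cs; nra.
pose s := Num.sqrt (dot3 c c).
have sp : 0 < s by rewrite sqrtr_gt0.
have ss : s * s = dot3 c c by rewrite -expr2 sqr_sqrtr // ltW.
pose c' := s^-1 *: c; pose c0' := c0 / s.
have hc' : unit3 c'.
  rewrite /unit3 /c' dot3_scalel dot3_scale -ss.
  field; lra.
have hfs : hfun c0 c = s * hfun c0' c'.
  rewrite /hfun mulr_sumr; apply: eq_bigr => i _.
  rewrite -(gtr0_norm sp) -normrM; congr `|_|.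
  rewrite /c' /c0' dot3_scalel; field; lra.
have hcx' : dot3 c x = s * dot3 c' x.
  rewrite /c' dot3_scalel; field; lra.
rewrite hfs hcx' mulrCA ler_pM2l //.
have := CS hc' hx => /andP [_ h1].
apply: (le_trans (y := r0)); first by nra.
case: (lerP `|c0'| 1) => hc0.
  apply: r0_le => //; move: hc0; rewrite ler_norml.
  by move=> /andP [h2 h3]; apply/andP; split.
apply: (le_trans r0_le1); apply: (le_trans (ltW hc0)); exact: hge.
Qed.


Lemma dot30l (w : 'rV[R]_3) : dot3 0 w = 0.
Proof. rewrite dot3E !mxE; ring. Qed.

Lemma povm_pm i : povm_of alpha eta nv i = pm (alpha i) ((alpha i * eta i) *: nv i).
Proof. by rewrite /povm_of /pm scalerDr scalerA -rmorphM nds_scale. Qed.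

Lemma Pfam_pm (r : R) (x : unit_vec R) a :
  Pfam r x a = pm (2^-1) ((2^-1 * ((if a then 1 else -1) * r)) *: sval x).
Proof. by rewrite /Pfam /pm scalerDr nds_scale scalerA -rmorphM. Qed.

Lemma exist_t (x : unit_vec R) : exists t : 'I_n -> R,
  (forall i, -1 <= t i <= 1) /\ \sum_(i < n) t i * alpha i = 0 /\
  \sum_(i < n) (t i * (alpha i * eta i)) *: nv i = inf Sset *: sval x.
Proof.
set r0 := inf Sset.
pose X := fun c : R * 'rV[R]_3 => r0 * dot3 c.2 (sval x).
pose v := fun (i : nat) (c : R * 'rV[R]_3) =>
  oapp (fun j : 'I_n => alpha j * (c.1 + eta j * dot3 c.2 (nv j))) 0 (insub i).
have vE (j : 'I_n) c : v j c = alpha j * (c.1 + eta j * dot3 c.2 (nv j)).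
  by rewrite /v valK.
have hcomb : forall c1 c2 (mu la : R), 0 <= mu -> 0 <= la -> exists c,
     X c = mu * X c1 + la * X c2 /\ forall i, v i c = mu * v i c1 + la * v i c2.
  move=> c1 c2 mu la _ _.
  exists (mu * c1.1 + la * c2.1, mu *: c1.2 + la *: c2.2); split.
    by rewrite /X /= dot3_linl dot3_scalel; ring.
  move=> i; rewrite /v; case: (insub i) => [j|] /=.
    by rewrite dot3_linl dot3_scalel; ring.
  ring.
have hbound : forall c, X c <= \sum_(i < n) `|v i c|.
  move=> c; rewrite (eq_bigr (fun j : 'I_n => `|alpha j * (c.1 + eta j * dot3 c.2 (nv j))|)); last first.
    by move=> j _; rewrite vE.
  exact: (key c.1 c.2 (svalP x)).
have [t [tb tH]] := zono hcomb hbound.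
have eqall c : X c = \sum_(j < n) t j * v j c.
  have h2 : \sum_(j < n) t j * v j (- c.1, - c.2) = - \sum_(j < n) t j * v j c.
    rewrite -sumrN; apply: eq_bigr => j _; rewrite !vE /= dot3N; ring.
  apply/eqP; rewrite eq_le tH /=; have := tH (- c.1, - c.2).
  rewrite h2 /X /= dot3N; lra.
exists (fun j : 'I_n => t j); split; first by move=> i; exact: tb.
split.
  have H := eqall (1, 0); rewrite /X /= dot30l mulr0 in H.
  rewrite [RHS]H; apply: eq_bigr => j _; rewrite vE /= dot30l; ring.
apply/matrixP => i k; rewrite (ord1 i).
have H := eqall (0, \row_(m < 3) ((m == k)%:R : R)); rewrite /X /= dot3_delta in H.
rewrite summxE [RHS]mxE H; apply: eq_bigr => j _; rewrite mxE vE /= dot3_delta; ring.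
Qed.

Lemma part1 : simulates (povm_of alpha eta nv) (Pfam (inf Sset)).
Proof.
have [tf htf] := choice exist_t.
exists (fun a x i => if a then (1 + tf x i) / 2 else (1 - tf x i) / 2).
split.
  move=> a x i; have [tb _] := htf x; have := tb i; case: a => /andP [h1 h2]; lra.
split.
  by move=> x i; rewrite big_bool /=; field.
move=> a x; have [tb [e1 e2]] := htf x.
rewrite Pfam_pm (eq_bigr (fun i => ((if a then (1 + tf x i) / 2 else (1 - tf x i) / 2)%:C)%C *:
   pm (alpha i) ((alpha i * eta i) *: nv i))); last by move=> i _; rewrite povm_pm.
rewrite pm_sum; case: a; congr pm.
- transitivity (2^-1 * \sum_(i < n) alpha i + 2^-1 * \sum_(i < n) tf x i * alpha i).
    by rewrite hsum e1; ring.
  rewrite [RHS](eq_bigr (fun i => 2^-1 * alpha i + 2^-1 * (tf x i * alpha i))); last by move=> i _; ring.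
  by rewrite big_split /= -!mulr_sumr.
- transitivity (2^-1 *: \sum_(i < n) (alpha i * eta i) *: nv i +
      2^-1 *: \sum_(i < n) (tf x i * (alpha i * eta i)) *: nv i).
    by rewrite hzero e2 scaler0 add0r scalerA mul1r.
  rewrite [RHS](eq_bigr (fun i => 2^-1 *: ((alpha i * eta i) *: nv i) + 2^-1 *: ((tf x i * (alpha i * eta i)) *: nv i))); last first.
    by move=> i _; rewrite !scalerA -scalerDl; congr (_ *: _); ring.
  by rewrite big_split /= -!scaler_sumr.
- transitivity (2^-1 * \sum_(i < n) alpha i - 2^-1 * \sum_(i < n) tf x i * alpha i).
    by rewrite hsum e1; ring.
  rewrite [RHS](eq_bigr (fun i => 2^-1 * alpha i - 2^-1 * (tf x i * alpha i))); last by move=> i _; ring.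
  by rewrite sumrB -!mulr_sumr.
- transitivity (2^-1 *: \sum_(i < n) (alpha i * eta i) *: nv i -
      2^-1 *: \sum_(i < n) (tf x i * (alpha i * eta i)) *: nv i).
    by rewrite hzero e2 scaler0 add0r scalerA -scaleNr; congr (_ *: _); ring.
  rewrite [RHS](eq_bigr (fun i => 2^-1 *: ((alpha i * eta i) *: nv i) - 2^-1 *: ((tf x i * (alpha i * eta i)) *: nv i))); last first.
    by move=> i _; rewrite !scalerA -scalerBl; congr (_ *: _); ring.
  by rewrite sumrB -!scaler_sumr.
Qed.

Lemma part2 (r' : R) : simulates (povm_of alpha eta nv) (Pfam r') -> r' <= inf Sset.
Proof.
move=> [p [hp1 [hp2 hp3]]].
apply: lb_le_inf S_ne _ => y [c [c0 [hc [hc0 ->]]]].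
pose x : unit_vec R := exist _ c hc.
have := hp3 true x.
rewrite Pfam_pm (eq_bigr (fun i => ((p true x i)%:C)%C *:
   pm (alpha i) ((alpha i * eta i) *: nv i))); last by move=> i _; rewrite povm_pm.
rewrite pm_sum => /pm_inj [hq1 hq2].
have hq01 i : -1 <= 2 * p true x i - 1 <= 1.
  have := hp2 x i; rewrite big_bool /=; have := hp1 false x i; have := hp1 true x i.
  move=> h1 h2 h3; apply/andP; split; lra.
have A : \sum_(i < n) p true x i * (alpha i * (eta i * dot3 c (nv i))) = 2^-1 * r'.
  have := congr1 (dot3 c) hq2; rewrite /= dot3_scale.
  have hcc : dot3 c c = 1 := hc; rewrite hcc mulr1 mul1r dot3_sum => ->.
  by apply: eq_bigr => i _; rewrite !dot3_scale; ring.
have E : \sum_(i < n) (2 * p true x i - 1) * (alpha i * (c0 + eta i * dot3 c (nv i))) = r'.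
  transitivity (2 * c0 * \sum_(i < n) p true x i * alpha i +
     2 * \sum_(i < n) p true x i * (alpha i * (eta i * dot3 c (nv i))) -
     \sum_(i < n) alpha i * (c0 + eta i * dot3 c (nv i))).
    rewrite [LHS](eq_bigr (fun i => 2 * c0 * (p true x i * alpha i) +
       2 * (p true x i * (alpha i * (eta i * dot3 c (nv i)))) -
       alpha i * (c0 + eta i * dot3 c (nv i)))); last by move=> i _; ring.
    by rewrite sumrB big_split /= !mulr_sumr.
  by rewrite sumlin A -hq1; field.
rewrite -E; apply: ler_sum => i _; exact: sign_le.
Qed.

End Main.

Unset Implicit Arguments.

Theorem theorem3 (R : realType) (n : nat) (alpha eta : 'I_n -> R)
    (nv : 'I_n -> 'rV[R]_3) :
  (forall i, 0 <= alpha i) ->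
  (forall i, 0 <= eta i <= 1) ->
  (forall i, unit3 (nv i)) ->
  \sum_(i < n) alpha i = 1 ->
  \sum_(i < n) (alpha i * eta i) *: nv i = 0 ->
  is_Rval (povm_of alpha eta nv)
    (inf [set x : R | exists (c : 'rV[R]_3) (c0 : R),
            unit3 c /\ -1 <= c0 <= 1 /\
            x = \sum_(i < n) `|alpha i * (c0 + eta i * dot3 c (nv i))|]).
Proof.
move=> ha he hn hs hz; split.
  by apply: part1.
by move=> r'; apply: part2.
Qed.
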